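(* Let $\gamma=[0;1,1,c_3,1,c_5,1,c_7,1,\dots]$, i.e. $\gamma$ has infinite continued fraction expansion $[c_0;c_1,c_2,\dots]$ with $c_0=0$, $c_n=1$ for $n$ even $\ge2$ and for $n=1$, and $c_{2n+1}\in\{1,2\}$ for all $n\in\mathbb{N}$. Let $p_n/q_n$ denote its convergents. For every $m\in\mathbb{N}$: (i) if $\lfloor m\gamma\rfloor/m$ is not a convergent of $\gamma$, then $\frac{2}{\pi}m\tan\left(\frac{\pi}{2}(m\gamma-\lfloor m\gamma\rfloor)\right)>1$; (ii) if $\lfloor m\gamma\rfloor=p_{2n}$ and $m=q_{2n}$ for some $n$, and $c_{2n+1}=1$, then $\frac{2}{\pi}m\tan\left(\frac{\pi}{2}(m\gamma-\lfloor m\gamma\rfloor)\right)>\frac{2}{5}$; (iii) if $\lfloor m\gamma\rfloor=p_{2n}$ and $m=q_{2n}$ for some $n$, and $c_{2n+1}=2$, then $\frac{2}{\pi}m\tan\left(\frac{\pi}{2}(m\gamma-\lfloor m\gamma\rfloor)\right)<\frac{4}{\pi}(2-\sqrt{3})$.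
   Context: $[c_0;c_1,c_2,\dots]$ denotes the continued fraction $c_0+\cfrac{1}{c_1+\cfrac{1}{c_2+\cdots}}$. The $n$-th convergent of $\gamma$ is $p_n/q_n=[c_0;c_1,\dots,c_n]$ written in lowest terms with $q_n>0$. $\mathbb{N}=\{1,2,\dots\}$. *)

(* Defs.v *)
From HB Require Import structures.
From mathcomp Require Import all_boot all_order all_algebra.
From mathcomp Require Import all_classical all_reals all_analysis.
Set Implicit Arguments. Unset Strict Implicit. Unset Printing Implicit Defensive.
Import Order.TTheory GRing.Theory Num.Theory.
Import numFieldNormedType.Exports.
Local Open Scope ring_scope.
Local Open Scope classical_set_scope.

Fixpoint cf_val (l : seq nat) : rat :=
  match l with
  | [::] => 0
  | [:: a] => a%:R
  | a :: l' => a%:R + (cf_val l')^-1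
  end.

Definition convergent (c : nat -> nat) (n : nat) : rat :=
  cf_val [seq c i | i <- iota 0 n.+1].

Definition cf_p (c : nat -> nat) (n : nat) : int := numq (convergent c n).
Definition cf_q (c : nat -> nat) (n : nat) : int := denq (convergent c n).

Definition cf_value {R : realType} (c : nat -> nat) (g : R) : Prop :=
  (fun n => ratr (convergent c n) : R) @ \oo --> g.

(* Main.v *)
Require Import Defs.
From HB Require Import structures.
From mathcomp Require Import all_boot all_order all_algebra.
From mathcomp Require Import all_classical all_reals all_analysis.
From mathcomp Require Import zify ring lra.
Import Order.TTheory GRing.Theory Num.Theory.
Import numFieldNormedType.Exports.
Local Open Scope ring_scope.

Fixpoint cfp (c : nat -> nat) (n : nat) : int :=
  match n with 0 => 1 | 1 => (c 0%N)%:Z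
  | S ((S n') as m) => (c m)%:Z * cfp c m + cfp c n' end.
Fixpoint cfq (c : nat -> nat) (n : nat) : int :=
  match n with 0 => 0 | 1 => 1
  | S ((S n') as m) => (c m)%:Z * cfq c m + cfq c n' end.

Lemma cfpSS c n : cfp c n.+2 = (c n.+1)%:Z * cfp c n.+1 + cfp c n.
Proof. by []. Qed.
Lemma cfqSS c n : cfq c n.+2 = (c n.+1)%:Z * cfq c n.+1 + cfq c n.
Proof. by []. Qed.

Lemma cf_shift c n :
  cfp c n.+1 = (c 0%N)%:Z * cfp (c \o S) n + cfq (c \o S) n /\
  cfq c n.+1 = cfp (c \o S) n.
Proof.
suff : (cfp c n.+1 = (c 0%N)%:Z * cfp (c \o S) n + cfq (c \o S) n /\
  cfq c n.+1 = cfp (c \o S) n) /\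
  (cfp c n.+2 = (c 0%N)%:Z * cfp (c \o S) n.+1 + cfq (c \o S) n.+1 /\
  cfq c n.+2 = cfp (c \o S) n.+1) by case.
elim: n => [|n [[IH1 IH2] [IH3 IH4]]].
  by split; split => /=; ring.
split; first by split.
rewrite (cfpSS c n.+1) (cfqSS c n.+1) IH3 IH4 IH1 IH2 [cfp (c \o S) n.+2]cfpSS [cfq (c \o S) n.+2]cfqSS /=.
split; ring.
Qed.

Lemma cfp_pos c : (forall i, (0 < c i)%N) -> forall n, 1 <= cfp c n.
Proof.
move=> cpos n.
suff : 1 <= cfp c n /\ 1 <= cfp c n.+1 by case.
elim: n => [|n [IH1 IH2]]; first by split => //=; have := cpos 0%N; lia.
split => //; rewrite cfpSS; have := cpos n.+1; nia.
Qed.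

Lemma cfq_pos c : (forall i, (0 < i)%N -> (0 < c i)%N) -> forall n,
  [/\ 0 <= cfq c n, 1 <= cfq c n.+1 & cfq c n <= cfq c n.+1].
Proof.
move=> cpos n; elim: n => [|n [IH0 IH1 IH2]]; first by split.
rewrite cfqSS; have := cpos n.+1 isT; split; nia.
Qed.

Lemma conv_eq c n : (forall i, (0 < i)%N -> (0 < c i)%N) ->
  convergent c n = (cfp c n.+1)%:~R / (cfq c n.+1)%:~R.
Proof.
elim: n c => [|n IH] c cpos; first by rewrite /convergent /= divr1.
have cpos' : forall i, (0 < i)%N -> (0 < (c \o S) i)%N by move=> i _; exact: cpos.
have := IH (c \o S) cpos'.
rewrite /convergent => IHc.
have -> : [seq c i | i <- iota 0 n.+2] = c 0%N :: [seq (c \o S) i | i <- iota 0 n.+1].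
  have -> : iota 0 n.+2 = 0%N :: iota (1 + 0) n.+1 by [].
  by rewrite iotaDl map_cons -map_comp.
have hp : 1 <= cfp (c \o S) n.+1 by apply: cfp_pos => i; exact: cpos.
have [e1 e2] := cf_shift c n.+1.
have E : forall a l, l != [::] -> cf_val (a :: l) = a%:R + (cf_val l)^-1.
  by move=> a [|b l].
rewrite E // IHc e1 e2 invf_div.
have hp' : (cfp (c \o S) n.+1)%:~R != 0 :> rat.
  by rewrite intr_eq0; apply/negP => /eqP h; rewrite h in hp.
rewrite rmorphD rmorphM /= -[X in X + _](mulfK hp') -mulrDl; congr (_ / _).

Qed.

Lemma cf_det c n : cfp c n.+1 * cfq c n - cfp c n * cfq c n.+1 = (-1) ^+ n.+1.
Proof.
elim: n => [|n IH]; first by rewrite /=; ring.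
rewrite (cfpSS c n) (cfqSS c n) exprS -IH; ring.
Qed.

Lemma cf_pq c n : (forall i, (0 < i)%N -> (0 < c i)%N) ->
  cf_p c n = cfp c n.+1 /\ cf_q c n = cfq c n.+1.
Proof.
move=> cpos.
have [_ hq _] := @cfq_pos c cpos n.
have cop : coprime `|cfp c n.+1| `|cfq c n.+1|.
  rewrite -coprimezE; apply/coprimezP.
  exists ((-1) ^+ n.+1 * cfq c n, - (-1) ^+ n.+1 * cfp c n) => /=.
  have := cf_det c n; move=> h.
  have -> : (-1) ^+ n.+1 * cfq c n * cfp c n.+1 + - (-1) ^+ n.+1 * cfp c n * cfq c n.+1
    = (-1) ^+ n.+1 * (cfp c n.+1 * cfq c n - cfp c n * cfq c n.+1) by ring.
  by rewrite h -exprMn mulrNN mulr1 expr1n.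
rewrite /cf_p /cf_q conv_eq // coprimeq_num // coprimeq_den //.
rewrite gtr0_sg ?mul1r; last by lia.
split => //; case: eqP => [h|_]; first by rewrite h in hq.
by rewrite gtr0_norm //; lia.
Qed.

Definition cfe c j N := cfp c N * cfq c j - cfp c j * cfq c N.

Lemma cfe_sign c j k : 0 <= (-1) ^+ j.+1 * cfe c j (j + k).
Proof.
suff : 0 <= (-1) ^+ j.+1 * cfe c j (j + k) /\ 0 <= (-1) ^+ j.+1 * cfe c j (j + k).+1 by case.
elim: k => [|k [IH1 IH2]].
  rewrite /cfe addn0 subrr mulr0; split => //.
  have := cf_det c j; rewrite mulrC => ->.
  by rewrite -exprMn mulrNN mulr1 expr1n.
split; first by rewrite addnS.
rewrite !addnS /cfe (cfpSS c (j + k)) (cfqSS c (j+k)).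
have -> : (-1) ^+ j.+1 * (((c (j + k).+1)%:Z * cfp c (j + k).+1 + cfp c (j + k)) * cfq c j -
   cfp c j * ((c (j + k).+1)%:Z * cfq c (j + k).+1 + cfq c (j + k))) =
  (c (j + k).+1)%:Z * ((-1) ^+ j.+1 * cfe c j (j + k).+1) + (-1) ^+ j.+1 * cfe c j (j+k)
  by rewrite /cfe; ring.
by apply: addr_ge0 => //; apply: mulr_ge0.
Qed.

Lemma cfe_two c j : cfe c j j.+2 = (-1) ^+ j.+1 * (c j.+1)%:Z.
Proof.
rewrite /cfe (cfpSS c j) (cfqSS c j).
have := cf_det c j => <-; ring.
Qed.

Lemma sign_odd {T : pzRingType} a : (-1) ^+ (2 * a)%N.+2 = 1 :> T.
Proof. have -> : (2 * a)%N.+2 = (2 * a.+1)%N by lia.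
by rewrite exprM sqrrN !expr1n. Qed.
Lemma sign_even {T : pzRingType} a : (-1) ^+ (2 * a)%N.+3 = -1 :> T.
Proof. by rewrite exprS sign_odd mulr1. Qed.

Definition U {R : realType} c i : R := (cfp c i)%:~R / (cfq c i)%:~R.

Lemma U_diff {R : realType} c j N : (forall i, (0 < i)%N -> (0 < c i)%N) ->
  U c N - U c j.+1 = (cfe c j.+1 N)%:~R / ((cfq c N)%:~R * (cfq c j.+1)%:~R) :> R
  \/ N = 0%N.
Proof.
move=> cpos; case: N => [|N]; [by right | left].
have [_ h1 _] := @cfq_pos c cpos N.
have [_ h2 _] := @cfq_pos c cpos j.
have q1 : (cfq c N.+1)%:~R != 0 :> R by rewrite intr_eq0; lia.
have q2 : (cfq c j.+1)%:~R != 0 :> R by rewrite intr_eq0; lia.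
rewrite /U /cfe; rewrite !rmorphB !rmorphM /=.
by field; apply/andP.
Qed.

Lemma U_pos_den {R : realType} c N : (forall i, (0 < i)%N -> (0 < c i)%N) ->
  0 < (cfq c N.+1)%:~R :> R.
Proof. move=> cpos; have [_ h1 _] := @cfq_pos c cpos N; rewrite ltr0z; lia. Qed.

Lemma U_ge_odd {R : realType} c a k : (forall i, (0 < i)%N -> (0 < c i)%N) ->
  U c (2 * a)%N.+1 <= U c ((2 * a)%N.+1 + k) :> R.
Proof.
move=> cpos; rewrite -subr_ge0.
case: (@U_diff R c (2 * a)%N ((2 * a)%N.+1 + k) cpos) => [->|]; last by rewrite addSn.
apply: divr_ge0; last by apply: mulr_ge0; apply: ltW; [rewrite addSn|]; apply: U_pos_den.
rewrite ler0z; have := cfe_sign c (2 * a)%N.+1 k; rewrite sign_odd mul1r //.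
Qed.

Lemma U_le_even {R : realType} c a k : (forall i, (0 < i)%N -> (0 < c i)%N) ->
  U c ((2 * a)%N.+2 + k) <= U c (2 * a)%N.+2 :> R.
Proof.
move=> cpos; rewrite -subr_le0.
case: (@U_diff R c (2 * a)%N.+1 ((2 * a)%N.+2 + k) cpos) => [->|]; last by rewrite addSn.
apply: mulr_le0_ge0; last by rewrite invr_ge0; apply: mulr_ge0; apply: ltW; [rewrite addSn|]; apply: U_pos_den.
rewrite lerz0; have := cfe_sign c (2 * a)%N.+2 k; rewrite sign_even mulN1r oppr_ge0 //.
Qed.

Lemma U_lt2 {R : realType} c j : (forall i, (0 < i)%N -> (0 < c i)%N) ->
  0 < (-1) ^+ j.+2 * (U c j.+3 - U c j.+1) :> R.
Proof.
move=> cpos.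
case: (@U_diff R c j j.+3 cpos) => [->|//].
rewrite cfe_two intrM intr_sign mulrA mulrA -exprMn mulrNN mulr1 expr1n mul1r.
apply: divr_gt0; first by rewrite ltr0z; have := cpos j.+2 isT; lia.
by apply: mulr_gt0; apply: U_pos_den.
Qed.

Lemma ratr_conv {R : realType} c n : (forall i, (0 < i)%N -> (0 < c i)%N) ->
  ratr (convergent c n) = U c n.+1 :> R.
Proof. by move=> cpos; rewrite conv_eq // fmorph_div /= !ratr_int. Qed.

Lemma gam_lo {R : realType} c (gamma : R) a : (forall i, (0 < i)%N -> (0 < c i)%N) ->
  cf_value c gamma -> U c (2 * a)%N.+1 < gamma.
Proof.
move=> cpos hg.
have h := @U_lt2 R c (2 * a)%N cpos; rewrite sign_odd mul1r subr_gt0 in h.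
apply: (lt_le_trans h).
apply: (cvgr_to_ge hg).
exists (2 * a)%N.+2 => // n /= hn.
rewrite ratr_conv //.
have -> : n.+1 = ((2 * a.+1)%N.+1 + (n - (2 * a)%N.+2))%N by lia.
have -> : (2 * a)%N.+3 = (2 * a.+1)%N.+1 by lia.
exact: U_ge_odd.
Qed.

Lemma gam_hi {R : realType} c (gamma : R) a : (forall i, (0 < i)%N -> (0 < c i)%N) ->
  cf_value c gamma -> gamma < U c (2 * a)%N.+2.
Proof.
move=> cpos hg.
have h := @U_lt2 R c (2 * a)%N.+1 cpos; rewrite sign_even mulN1r oppr_gt0 subr_lt0 in h.
apply: (le_lt_trans _ h).
apply: (cvgr_to_le hg).
exists (2 * a)%N.+3 => // n /= hn.
rewrite ratr_conv //.
have -> : n.+1 = ((2 * a.+1)%N.+2 + (n - (2 * a)%N.+3))%N by lia.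
have -> : (2 * a)%N.+4 = (2 * a.+1)%N.+2 by lia.
exact: U_le_even.
Qed.

Local Open Scope classical_set_scope.

Lemma cos_pos {R : realType} (x : R) : 0 <= x < pi / 2 -> 0 < cos x.
Proof.
move=> /andP[h1 h2]; apply: cos_gt0_pihalf; apply/andP; split => //.
by apply: (lt_le_trans _ h1); rewrite oppr_lt0 divr_gt0 // pi_gt0.
Qed.

Lemma MVT_tan {R : realType} (a b : R) : 0 <= a -> a < b -> b < pi / 2 ->
  exists2 c, a < c < b & tan b - tan a = (cos c)^-2 * (b - a).
Proof.
move=> h0 hab hb.
have hd : forall x, x \in `]a, b[%R -> is_derive x 1 (@tan R) ((cos x)^-2).
  move=> x; rewrite in_itv /= => /andP[ax xb]; apply: is_derive_tan.
  by rewrite gt_eqF // cos_pos // (le_trans h0 (ltW ax)) /= (lt_trans xb hb).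
case: (@MVT R tan (fun x => (cos x)^-2) a b hab hd) => [|c + E].
  apply/continuous_in_subspaceT => x -/[!(@mem_setE R)] /itvP inI.
  apply: continuous_tan; rewrite gt_eqF // cos_pos //.
  by rewrite (le_trans h0 (_ : a <= x)) ?inI //= (le_lt_trans (_ : x <= b) hb) ?inI.
by rewrite in_itv /= => cI; exists c.
Qed.

Lemma cos_lt {R : realType} (x y : R) : 0 <= x -> x < y -> y < pi / 2 -> cos y < cos x.
Proof.
move=> h0 hxy hy.
have hpi : pi / 2 < pi :> R by rewrite ltr_pdivrMr // ltr_pMr ?pi_gt0 // ltr1n.
have hx : x \in `[0, pi]%R.
  by rewrite in_itv /= h0 /=; apply/ltW/(lt_trans (lt_trans hxy hy)).
have hy' : y \in `[0, pi]%R.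
  by rewrite in_itv /= (le_trans h0 (ltW hxy)) /=; apply/ltW/(lt_trans hy).
by rewrite ltr_cos.
Qed.

Lemma tan_gt_id {R : realType} (y : R) : 0 < y -> y < pi / 2 -> y < tan y.
Proof.
move=> y0 yp.
have [c /andP[c0 cy] E] := @MVT_tan R 0 y (lexx 0) y0 yp.
rewrite tan0 !subr0 in E; rewrite E.
have k0 : 0 < cos c by apply: cos_pos; rewrite (ltW c0) (lt_trans cy yp).
have k1 : cos c < 1 by rewrite -cos0; apply: cos_lt => //; apply: lt_trans yp.
rewrite mulrC ltr_pdivlMr ?exprn_gt0 //.
have : 0 < 1 - cos c ^+ 2 by rewrite subr_gt0 expr_lt1 // ltW.
move=> h; have := mulr_gt0 y0 h; lra.
Qed.

Lemma tan_conv {R : realType} (s y : R) : 0 < s -> s < 1 -> 0 < y -> y < pi / 2 ->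
  tan (s * y) <= s * tan y.
Proof.
move=> s0 s1 y0 yp.
have sy0 : 0 < s * y by apply: mulr_gt0.
have syy : s * y < y by rewrite gtr_pMl.
have [c1 /andP[c10 c1y] E1] := @MVT_tan R 0 (s * y) (lexx 0) sy0 (lt_trans syy yp).
have [c2 /andP[c20 c2y] E2] := @MVT_tan R (s * y) y (ltW sy0) syy yp.
rewrite tan0 !subr0 in E1.
have k1 : 0 < cos c1 by apply: cos_pos; rewrite (ltW c10) (lt_trans c1y (lt_trans syy yp)).
have k2 : 0 < cos c2 by apply: cos_pos; rewrite (ltW (lt_trans sy0 c20)) (lt_trans c2y yp).
have k12 : cos c2 < cos c1.
  by apply: cos_lt; [exact: ltW | exact: lt_trans c1y c20 | exact: lt_trans c2y yp].
have g12 : (cos c1)^-2 <= (cos c2)^-2.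
  rewrite lef_pV2 ?qualifE /= ?exprn_gt0 //.
  by rewrite ler_pXn2r ?qualifE /= ?ltW.
have -> : tan y = tan (s * y) + (cos c2)^-2 * (y - s * y) by rewrite -E2; ring.
rewrite E1 -subr_ge0.
have -> : s * ((cos c1)^-2 * (s * y) + (cos c2)^-2 * (y - s * y)) - (cos c1)^-2 * (s * y)
  = (1 - s) * (s * y) * ((cos c2)^-2 - (cos c1)^-2) by ring.
apply: mulr_ge0; first by apply: mulr_ge0; lra.
by rewrite subr_ge0.
Qed.

Lemma tan_pi12 {R : realType} : tan (pi / 12) = 2 - Num.sqrt 3 :> R.
Proof.
set t := tan (pi / 12).
have pi0 : (0 : R) < pi := pi_gt0 R.
have h12 : (0 : R) < pi / 12 < (pi : R) / 2 by apply/andP; split; lra.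
have h6 : (0 : R) <= pi / 6 < (pi : R) / 2 by apply/andP; split; lra.
have c12 : cos (pi / 12) != 0 :> R by rewrite gt_eqF // cos_pos // ltW ?h12 //=; case/andP: h12.
have c6 : cos (pi / 6) != 0 :> R by rewrite gt_eqF // cos_pos.
have Eu : tan (pi / 6) = t *+ 2 / (1 - t ^+ 2) :> R.
  by rewrite -tan_mulr2n // mulr2n; congr tan; lra.
have E1 : 1 = (tan (pi / 6) + t) / (1 - tan (pi / 6) * t).
  rewrite -tanD //; transitivity (tan ((pi : R) / 4)); first by rewrite tan_piquarter.
  congr tan; lra.
have t0 : 0 < t.
  case/andP: h12 => a b; exact: (lt_trans a (@tan_gt_id R _ a b)).
have t1 : t < 1.
  rewrite -tan_piquarter /t ltr_tan ?in_itv /=; try (apply/andP; split); lra.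
set u := tan (pi / 6) in Eu E1.
have d0 : 1 - u * t != 0.
  apply/negP => /eqP h; move: E1; rewrite h invr0 mulr0; apply/eqP; exact: oner_neq0.
have F1 : u + t = 1 - u * t.
  by apply: divr1_eq; rewrite -E1.
have F2 : u * (1 - t ^+ 2) = t *+ 2.
  by rewrite Eu divfK // subr_eq0 eq_sym lt_eqF // expr_lt1 // ltW.
have G : u * (1 + t) = 1 - t by rewrite mulrDr mulr1; lra.
have H : (1 - t) * (1 - t) = t *+ 2.
  by transitivity ((1 - t) * (u * (1 + t))); [rewrite G | rewrite -F2; ring].
have P2 : (2 - t) ^+ 2 = 3.
  by transitivity ((1 - t) * (1 - t) - t *+ 2 + 3); [ring | rewrite H; ring].
by rewrite -P2 sqrtr_sqr gtr0_norm; [ring | lra].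
Qed.

Local Close Scope classical_set_scope.

Lemma cpos_of c : c 1%N = 1%N -> (forall n : nat, (0 < n)%N -> c (2 * n)%N = 1%N) ->
  (forall n : nat, (0 < n)%N -> c (2 * n).+1 = 1%N \/ c (2 * n).+1 = 2%N) ->
  forall i, (0 < i)%N -> (0 < c i)%N.
Proof.
move=> h1 he ho i i0.
have := odd_double_half i; case: (odd i) => /= E; rewrite -E -mul2n.
- case: (i./2) => [|k]; first by rewrite h1.
  by case: (ho k.+1 isT) => ->.
- rewrite he //; move: i0; rewrite -E; case: (i./2) => //.
Qed.

Lemma key_ineq {R : realType} (A B X Y m u v th : R) : 0 < u -> 0 < v ->
  X * v + Y * u = 1 -> th = A * u + B * v -> X <= m -> 0 < X -> 0 < Y ->
  1 <= B -> Y <= A * X -> 1 <= m * th.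
Proof.
move=> u0 v0 E T Xm X0 Y0 B1 AX.
have h1 : 0 <= (A * X - Y) * u by apply: mulr_ge0; lra.
have h2 : 0 <= (B - 1) * (X * v) by apply: mulr_ge0; [lra | apply: mulr_ge0; lra].
have A0 : 0 <= A.
  rewrite leNgt; apply/negP => A0.
  have : A * X < 0 by rewrite pmulr_llt0.
  lra.
have t0 : 0 <= th by rewrite T; apply: addr_ge0; apply: mulr_ge0; lra.
have h3 : 0 <= (m - X) * th by apply: mulr_ge0; lra.
have h4 : X * th = (A * X - Y) * u + (B - 1) * (X * v) + (X * v + Y * u) by rewrite T; ring.
have h5 : m * th = (m - X) * th + X * th by ring.
rewrite E in h4; lra.
Qed.

Lemma q_ge c n : (forall i, (0 < i)%N -> (0 < c i)%N) -> n%:Z <= cfq c n.+1.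
Proof.
move=> cpos.
suff : n%:Z <= cfq c n.+1 /\ n.+1%:Z <= cfq c n.+2 by case.
elim: n => [|n [IH1 IH2]].
  by split => //=; have := cpos 1%N isT; lia.
split => //; rewrite cfqSS.
have := cpos n.+2 isT; have [h0 h1 _] := @cfq_pos c cpos n.
have [_ h1' _] := @cfq_pos c cpos n.+1.
case: n IH1 IH2 h0 h1 h1' => [|n] IH1 IH2 h0 h1 h1'; nia.
Qed.

Lemma x01 {R : realType} c (x : R) : c 0%N = 0%N -> c 1%N = 1%N ->
  (forall i, (0 < i)%N -> (0 < c i)%N) -> cf_value c x -> 0 < x < 1.
Proof.
move=> h0 h1 cpos hx.
have l := @gam_lo R c x 0%N cpos hx.
have r := @gam_hi R c x 0%N cpos hx.
rewrite /U /= h0 h1 in l r.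
move: l r.
change (1%Z * 0%Z + 1) with (1 : int); change (1%Z * 1 + 0) with (1 : int).
by rewrite mul0r divr1 => -> ->.
Qed.

Lemma intr_ge1 {R : realType} (z : int) : 1 <= z -> (1 : R) <= z%:~R.
Proof. by move=> h; have : ((1 : int)%:~R : R) <= z%:~R by rewrite ler_int. Qed.
Lemma intr_leN1 {R : realType} (z : int) : z <= -1 -> z%:~R <= (-1 : R).
Proof.
move=> h; have : (z%:~R : R) <= (-1 : int)%:~R by rewrite ler_int.
by rewrite mulrNz.
Qed.

Lemma contra1 {R : realType} (A B u v th : R) : A <= -1 -> 1 <= B -> 0 < u -> 0 < v ->
  th = A * u + B * (- v) -> th < 0.
Proof. move=> hA hB hu hv ->; nra. Qed.

Lemma neg_of_mul (a X : int) : a * X < 0 -> 1 <= X -> a <= -1.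
Proof. nia. Qed.
Lemma pos_of_mul (a X : int) : 0 < a * X -> 1 <= X -> 1 <= a.
Proof. nia. Qed.

Lemma lattice {R : realType} c (x : R) (m : nat) (p : int) :
  c 0%N = 0%N -> c 1%N = 1%N ->
  (forall n : nat, (0 < n)%N -> c (2 * n)%N = 1%N) ->
  (forall n : nat, (0 < n)%N -> c (2 * n).+1 = 1%N \/ c (2 * n).+1 = 2%N) ->
  cf_value c x -> (0 < m)%N ->
  0 <= m%:R * x - p%:~R -> m%:R * (m%:R * x - p%:~R) < 1 ->
  exists n, (p%:~R / m%:R : rat) = convergent c n.
Proof.
move=> h0 h1 he ho hx m0 th0 th1.
have cpos := @cpos_of c h1 he ho.
have /andP[x0 x1] := @x01 R c x h0 h1 cpos hx.
case: (ltnP 1 m) => [m2|m1]; last first.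
  have m1' : m = 1%N by lia.
  subst m; exists 0%N; rewrite /convergent /= h0.
  rewrite mul1r in th0 th1; rewrite mul1r in th1.
  have pl : p < 1.
    have : (p%:~R : R) < 1 by lra.
    by rewrite ltrz1.
  have pg : -1 < p.
    have : ((-1 : int)%:~R : R) < p%:~R by rewrite mulrNz mulr1z; lra.
    by rewrite ltr_int.
  by have -> : p = 0 by lia.
have c2 : c 2%N = 1%N by apply: (he 1%N).
have exP : exists j, (m%:Z < cfq c j) by exists m.+2; have := q_ge c m.+1 cpos; lia.
case: (ex_minnP exP) => j0 Pj0 minj0.
have j04 : (4 <= j0)%N.
  move: Pj0 minj0; case: j0 => [|[|[|[|j]]]] //=; rewrite ?h1 ?c2 => P _; lia.
set i := j0.-1.
have i3 : (3 <= i)%N by rewrite /i; lia.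
have ij : i.+1 = j0 by rewrite /i; lia.
have qi : cfq c i <= m%:Z.
  rewrite leNgt; apply/negP => h; have := minj0 i h; lia.
have qi1 : m%:Z < cfq c i.+1 by rewrite ij.
set X := cfq c i in qi *; set Y := cfq c i.+1 in qi1 *.
set P0 := cfp c i; set P1 := cfp c i.+1.
have det : P1 * X - P0 * Y = (-1) ^+ i.+1 by exact: cf_det.
set e := (-1) ^+ i.+1 in det.
have e2 : e * e = 1 by rewrite /e -exprMn mulrNN mulr1 expr1n.
set a := e * (m%:Z * P1 - p * Y).
set b := e * (p * X - m%:Z * P0).
have Em : m%:Z = a * X + b * Y.
  have -> : a * X + b * Y = e * (P1 * X - P0 * Y) * m%:Z by rewrite /a /b; ring.
  by rewrite det e2 mul1r.
have Ep : p = a * P0 + b * P1.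
  have -> : a * P0 + b * P1 = e * (P1 * X - P0 * Y) * p by rewrite /a /b; ring.
  by rewrite det e2 mul1r.
have [_ X1 _] := @cfq_pos c cpos i.-1.
rewrite prednK in X1; last by lia.
have [_ Y1 _] := @cfq_pos c cpos i.
case: (b =P 0) => [b0|bn0].
  exists i.-1; rewrite conv_eq // prednK; last by lia.
  rewrite -/X -/P0.
  have a0 : a != 0 by apply/eqP => a0; move: Em; rewrite a0 b0; lia.
  change (m%:R : rat) with ((m%:Z)%:~R : rat).
  apply/eqP; rewrite eqr_div ?intr_eq0; [|lia|lia].
  by rewrite -!intrM Ep Em b0; apply/eqP; congr intr; ring.
exfalso.
have thE : m%:R * x - p%:~R = a%:~R * (X%:~R * x - P0%:~R) + b%:~R * (Y%:~R * x - P1%:~R) :> R.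
  change (m%:R : R) with ((m%:Z)%:~R : R); rewrite Em Ep !intrD !intrM; ring.
have mX : (X%:~R : R) <= m%:R.
  by change (m%:R : R) with ((m%:Z)%:~R : R); rewrite ler_int.
have X0 : (0 : R) < X%:~R by rewrite ltr0z; lia.
have Y0 : (0 : R) < Y%:~R by rewrite ltr0z; lia.
have := odd_double_half i; case: (odd i) => /= Ei0; rewrite -mul2n in Ei0.
-
  have Ei : (2 * i./2)%N.+1 = i by lia.
  have l := @gam_lo R c x i./2 cpos hx; have r := @gam_hi R c x i./2 cpos hx.
  rewrite Ei /U -/X -/P0 ltr_pdivrMr // in l.
  have Ei' : (2 * i./2)%N.+2 = i.+1 by rewrite -[in RHS]Ei.
  rewrite Ei' /U -/Y -/P1 ltr_pdivlMr // in r.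
  have e1 : e = 1 by rewrite /e -Ei' sign_odd.
  have detr : (X%:~R * P1%:~R - Y%:~R * P0%:~R : R) = 1.
    by rewrite -!intrM -intrB mulrC [Y * _]mulrC det e1.
  rewrite -/X in X1; rewrite -/Y in Y1.
  clearbody a b X Y P0 P1 e i.
  have u0 : (0 : R) < X%:~R * x - P0%:~R by rewrite subr_gt0 mulrC.
  have v0 : (0 : R) < P1%:~R - Y%:~R * x by rewrite subr_gt0 mulrC.
  have thE' : m%:R * x - p%:~R = a%:~R * (X%:~R * x - P0%:~R) + b%:~R * (- (P1%:~R - Y%:~R * x)) :> R.
    by rewrite thE; ring.
  case: (ltrP 0 b) => hb.
    have hh : 0 <= (b - 1) * Y by apply: mulr_ge0; [clear -hb; lia | clear -Y1; lia].
    have aX : a * X < 0 by clear -hh Em qi1; lia.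
    have ha : a <= -1 by apply: neg_of_mul aX X1.
    have ha' : (a%:~R : R) <= -1 by apply: intr_leN1.
    have hb' : (1 : R) <= b%:~R by apply: intr_ge1; clear -hb; lia.
    have := @contra1 R _ _ _ _ _ ha' hb' u0 v0 thE'.
    by rewrite ltNge th0.
  have hb1 : b <= -1 by clear -hb bn0; lia.
  have hh : 0 <= (- b - 1) * Y by apply: mulr_ge0; [clear -hb1; lia | clear -Y1; lia].
  have YaX : Y <= a * X by clear -hh Em qi; lia.
  have hb' : (1 : R) <= - b%:~R by rewrite -intrN; apply: intr_ge1; clear -hb1; lia.
  have YaX' : (Y%:~R : R) <= a%:~R * X%:~R by rewrite -intrM ler_int.
  have E1 : (X%:~R * (P1%:~R - Y%:~R * x) + Y%:~R * (X%:~R * x - P0%:~R) : R) = 1.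
    by transitivity (X%:~R * P1%:~R - Y%:~R * P0%:~R : R); [ring | exact: detr].
  have T : m%:R * x - p%:~R = a%:~R * (X%:~R * x - P0%:~R) + (- b%:~R) * (P1%:~R - Y%:~R * x) :> R.
    by rewrite thE; ring.
  have := @key_ineq R _ _ _ _ _ _ _ _ u0 v0 E1 T mX X0 Y0 hb' YaX'.
  by rewrite leNgt th1.
-
  have Ek : (2 * i./2)%N = i by clear -Ei0; lia.
  have k1 : (2 * (i./2).-1)%N.+2 = i by clear -Ek i3; lia.
  have l := @gam_lo R c x i./2 cpos hx; have r := @gam_hi R c x (i./2).-1 cpos hx.
  rewrite k1 /U -/X -/P0 ltr_pdivlMr // in r.
  have Ek' : (2 * i./2)%N.+1 = i.+1 by rewrite Ek.
  rewrite Ek' /U -/Y -/P1 ltr_pdivrMr // in l.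
  have e1 : e = -1 by rewrite /e -k1 sign_even.
  have detr : (X%:~R * P1%:~R - Y%:~R * P0%:~R : R) = -1.
    by rewrite -!intrM -intrB mulrC [Y * _]mulrC det e1 intrN.
  have iS : i = (i.-1).+1 by clear -i3; lia.
  have iS2 : i = (i.-2).+2 by clear -i3; lia.
  have EY : Y = (c i)%:Z * X + cfq c i.-1.
    by have := cfqSS c i.-1; rewrite -iS.
  have EX : X = (c i.-1)%:Z * cfq c i.-1 + cfq c i.-2.
    have := cfqSS c i.-2; rewrite -iS2.
    by have -> : (i.-2).+1 = i.-1 by clear -i3; lia.
  have ci : c i = 1%N by rewrite -Ek he //; clear -Ek i3; lia.
  have ci1 : (1 <= c i.-1)%N by apply: cpos; clear -i3; lia.
  have [q1 _ _] := @cfq_pos c cpos i.-1.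
  have [_ q2 _] := @cfq_pos c cpos (i - 3)%N.
  have i3' : ((i - 3)%N).+1 = i.-2 by clear -i3; lia.
  rewrite i3' in q2.
  have hq : 0 <= ((c i.-1)%:Z - 1) * cfq c i.-1 by apply: mulr_ge0; [clear -ci1; lia | clear -q1; lia].
  have Y2X : Y < 2 * X by rewrite ci in EY; clear -EY EX hq q2; lia.
  rewrite -/X in X1; rewrite -/Y in Y1.
  clearbody a b X Y P0 P1 e i.
  have u0 : (0 : R) < P0%:~R - X%:~R * x by rewrite subr_gt0 mulrC.
  have v0 : (0 : R) < Y%:~R * x - P1%:~R by rewrite subr_gt0 mulrC.
  case: (ltrP b 0) => hb.
    have hh : 0 <= (- b - 1) * Y by apply: mulr_ge0; [clear -hb; lia | clear -Y1; lia].
    have aX : 0 < a * X by clear -hh Em Y1; lia.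
    have ha : 1 <= a by apply: pos_of_mul aX X1.
    have ha' : (1 : R) <= a%:~R by apply: intr_ge1.
    have hb' : (b%:~R : R) <= -1 by apply: intr_leN1; clear -hb; lia.
    have thE' : m%:R * x - p%:~R = b%:~R * (Y%:~R * x - P1%:~R) + a%:~R * (- (P0%:~R - X%:~R * x)) :> R.
      by rewrite thE; ring.
    have := @contra1 R _ _ _ _ _ hb' ha' v0 u0 thE'.
    by rewrite ltNge th0.
  have hb1 : 1 <= b by clear -hb bn0; lia.
  have hh : 0 <= (b - 1) * Y by apply: mulr_ge0; [clear -hb1; lia | clear -Y1; lia].
  have aX : a * X < 0 by clear -hh Em qi1; lia.
  have ha : a <= -1 by apply: neg_of_mul aX X1.
  have YaX : Y <= (- a) * X.
    case: (b =P 1) => [b1|bn1].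
      have hh' : 0 <= (- a - 1) * X by apply: mulr_ge0; [clear -ha; lia | clear -X1; lia].
      rewrite b1 in Em; clear -Em hh' qi Y2X; lia.
    have hh' : 0 <= (b - 2) * Y by apply: mulr_ge0; [clear -hb1 bn1; lia | clear -Y1; lia].
    clear -hh' Em qi1; lia.
  have hb' : (1 : R) <= b%:~R by apply: intr_ge1.
  have YaX' : (Y%:~R : R) <= (- a)%:~R * X%:~R by rewrite -intrM ler_int.
  have E1 : (X%:~R * (Y%:~R * x - P1%:~R) + Y%:~R * (P0%:~R - X%:~R * x) : R) = 1.
    by transitivity (- (X%:~R * P1%:~R - Y%:~R * P0%:~R) : R); [ring | rewrite detr opprK].
  have T : m%:R * x - p%:~R = (- a)%:~R * (P0%:~R - X%:~R * x) + b%:~R * (Y%:~R * x - P1%:~R) :> R.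
    by rewrite thE intrN; ring.
  have := @key_ineq R _ _ _ _ _ _ _ _ u0 v0 E1 T mX X0 Y0 hb' YaX'.
  by rewrite leNgt th1.
Qed.

Lemma fin_F {R : realType} (m th : R) : 0 < m -> 0 < th -> th < 1 ->
  m * th < 2 / pi * m * tan (pi / 2 * th).
Proof.
move=> m0 t0 t1.
have pi0 : (0 : R) < pi := pi_gt0 R.
have y0 : 0 < pi / 2 * th by apply: mulr_gt0 => //; lra.
have y1 : pi / 2 * th < pi / 2 by rewrite gtr_pMr //; lra.
have := @tan_gt_id R _ y0 y1 => h.
have -> : m * th = 2 / pi * m * (pi / 2 * th) by field; lra.
by rewrite ltr_pM2l // mulr_gt0 // divr_gt0.
Qed.

Lemma fin_ii {R : realType} (Q P q5 p5 x : R) : 0 < Q -> 0 < q5 -> p5 < x * q5 ->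
  2 * q5 <= Q * (Q * p5 - P * q5) * 5 -> 2 / 5 < Q * (Q * x - P).
Proof.
move=> Q0 q0 h1 h2.
have A2 : 0 < Q * Q * (x * q5 - p5) by apply: mulr_gt0; [apply: mulr_gt0 | lra].
have : 0 < (Q * (Q * x - P) - 2 / 5) * q5 by lra.
by rewrite pmulr_lgt0 // subr_gt0.
Qed.

Lemma fin_iii {R : realType} (Q P q3 p3 x : R) : 0 < Q -> 0 < q3 -> x * q3 < p3 ->
  3 * (Q * (Q * p3 - P * q3)) <= q3 -> Q * (Q * x - P) < 1 / 3.
Proof.
move=> Q0 q0 h1 h2.
have A2 : 0 < Q * Q * (p3 - x * q3) by apply: mulr_gt0; [apply: mulr_gt0 | lra].
have : 0 < (1 / 3 - Q * (Q * x - P)) * q3 by lra.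
by rewrite pmulr_lgt0 // subr_gt0.
Qed.

Lemma fin_tan {R : realType} (m th : R) : 2 <= m -> 0 < th -> m * th < 1 / 3 ->
  2 / pi * m * tan (pi / 2 * th) < 4 / pi * (2 - Num.sqrt 3).
Proof.
move=> m2 t0 mt.
have pi0 : (0 : R) < pi := pi_gt0 R.
have t6 : th < 1 / 6.
  have : 2 * th <= m * th by rewrite ler_pM2r.
  lra.
set s := 6 * th.
have s0 : 0 < s by rewrite /s; lra.
have s1 : s < 1 by rewrite /s; lra.
have y0 : 0 < pi / 12 :> R by apply: divr_gt0.
have y1 : pi / 12 < pi / 2 :> R by lra.
have -> : pi / 2 * th = s * (pi / 12) by rewrite /s; field.
have h := @tan_conv R _ _ s0 s1 y0 y1.
rewrite tan_pi12 in h.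
have tp : 0 < 2 - Num.sqrt 3 :> R.
  by rewrite -tan_pi12; apply: lt_trans y0 (@tan_gt_id R _ y0 y1).
have c0 : 0 < 2 / pi * m by apply: mulr_gt0; [apply: divr_gt0 | lra].
have h2 : 2 / pi * m * tan (s * (pi / 12)) <= 2 / pi * m * (s * (2 - Num.sqrt 3)).
  by rewrite ler_pM2l.
apply: (le_lt_trans h2).
have -> : 2 / pi * m * (s * (2 - Num.sqrt 3)) = (12 * (m * th)) / pi * (2 - Num.sqrt 3).
  by rewrite /s; field; lra.
rewrite ltr_pM2r // ltr_pM2r ?invr_gt0 //; lra.
Qed.

Lemma fin_ii' {R : realType} (Q P q5 p5 : int) (x : R) : 0 < Q -> 0 < q5 ->
  p5%:~R < x * q5%:~R -> 2 * q5 <= Q * (Q * p5 - P * q5) * 5 ->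
  2 / 5 < Q%:~R * (Q%:~R * x - P%:~R).
Proof.
move=> Q0 q0 h1 h2; apply: (@fin_ii R _ _ q5%:~R p5%:~R) => //.
- by rewrite ltr0z.
- by rewrite ltr0z.
- by move: h2; rewrite -(ler_int R) !intrM intrB !intrM.
Qed.

Lemma fin_iii' {R : realType} (Q P q3 p3 : int) (x : R) : 0 < Q -> 0 < q3 ->
  x * q3%:~R < p3%:~R -> 3 * (Q * (Q * p3 - P * q3)) <= q3 ->
  Q%:~R * (Q%:~R * x - P%:~R) < 1 / 3.
Proof.
move=> Q0 q0 h1 h2; apply: (@fin_iii R _ _ q3%:~R p3%:~R) => //.
- by rewrite ltr0z.
- by rewrite ltr0z.
- by move: h2; rewrite -(ler_int R) !intrM intrB !intrM.
Qed.

Lemma exp_gen (f : nat -> int) (c : nat -> nat) k :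
  (forall j, f j.+2 = (c j.+1)%:Z * f j.+1 + f j) ->
  c k.+1 = 1%N -> c k.+2 = 1%N -> c k.+4 = 1%N ->
  f k.+4.+1 = (2 * (c k.+3)%:Z + 3) * f k.+1 + ((c k.+3)%:Z + 2) * f k.
Proof. move=> rec e1 e2 e4; rewrite !rec e1 e2 e4; ring. Qed.

Lemma exp_gen3 (f : nat -> int) (c : nat -> nat) k :
  (forall j, f j.+2 = (c j.+1)%:Z * f j.+1 + f j) ->
  c k.+1 = 2%N -> c k.+2 = 1%N ->
  f k.+4 = (3 * (c k.+3)%:Z + 2) * f k.+1 + ((c k.+3)%:Z + 1) * f k.
Proof. move=> rec e1 e2; rewrite !rec e1 e2; ring. Qed.

Lemma codd c k : c 1%N = 1%N ->
  (forall n : nat, (0 < n)%N -> c (2 * n).+1 = 1%N \/ c (2 * n).+1 = 2%N) ->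
  c (2 * k)%N.+1 = 1%N \/ c (2 * k)%N.+1 = 2%N.
Proof.
move=> h1 ho; case: k => [|k]; first by left.
exact: (ho k.+1 isT).
Qed.

Lemma q_ratio c n : (forall i, (0 < i)%N -> (0 < c i)%N) -> c 1%N = 1%N ->
  (forall n : nat, (0 < n)%N -> c (2 * n)%N = 1%N) ->
  (forall n : nat, (0 < n)%N -> c (2 * n).+1 = 1%N \/ c (2 * n).+1 = 2%N) ->
  4 * cfq c (2 * n)%N <= 3 * cfq c (2 * n)%N.+1.
Proof.
move=> cpos h1 he ho; case: n => [|k]; first by [].
have E : (2 * k.+1)%N = (2 * k)%N.+2 by lia.
have c2 : c (2 * k)%N.+2 = 1%N by rewrite -E he.
rewrite E (cfqSS c (2 * k)%N.+1) (cfqSS c (2 * k)%N) c2.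
have [a0 _ am] := @cfq_pos c cpos (2 * k)%N.
have [b0 _ _] := @cfq_pos c cpos (2 * k)%N.+1.
by case: (@codd c k h1 ho) => ->; lia.
Qed.

Lemma q_ratio2 c n : (forall i, (0 < i)%N -> (0 < c i)%N) ->
  (forall n : nat, (0 < n)%N -> c (2 * n)%N = 1%N) -> (0 < n)%N ->
  cfq c (2 * n)%N.+1 <= 2 * cfq c (2 * n)%N.
Proof.
move=> cpos he; case: n => [//|k] _.
have E : (2 * k.+1)%N = (2 * k)%N.+2 by lia.
have c2 : c (2 * k)%N.+2 = 1%N by rewrite -E he.
rewrite E (cfqSS c (2 * k)%N.+1) c2.
have [_ _ am] := @cfq_pos c cpos (2 * k)%N.+1.
lia.
Qed.

Theorem lemma5p3 (R : realType) (c : nat -> nat) (gamma : R) :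
  c 0%N = 0%N ->
  c 1%N = 1%N ->
  (forall n : nat, (0 < n)%N -> c (2 * n)%N = 1%N) ->
  (forall n : nat, (0 < n)%N -> c (2 * n).+1 = 1%N \/ c (2 * n).+1 = 2%N) ->
  cf_value c gamma ->
  forall m : nat, (0 < m)%N ->
    let fl := Num.floor (m%:R * gamma) in
    let F := 2 / pi * m%:R * tan (pi / 2 * (m%:R * gamma - fl%:~R)) in
    ((forall n : nat, (fl%:~R / m%:R : rat) != convergent c n) -> 1 < F)
    /\ ((exists n : nat, [/\ fl = cf_p c (2 * n), m%:Z = cf_q c (2 * n)
                           & c (2 * n).+1 = 1%N]) -> 2 / 5 < F)
    /\ ((exists n : nat, [/\ fl = cf_p c (2 * n), m%:Z = cf_q c (2 * n)
                           & c (2 * n).+1 = 2%N]) -> F < 4 / pi * (2 - Num.sqrt 3)).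
Proof.
move=> h0 h1 he ho hx m m0 fl F.
have cpos := @cpos_of c h1 he ho.
have /andP[fl1 fl2] := floor_itv (m%:R * gamma).
rewrite -/fl in fl1 fl2.
rewrite intrD in fl2.
rewrite /F; set th := m%:R * gamma - fl%:~R.
have th0 : 0 <= th by rewrite /th subr_ge0.
have th1 : th < 1 by rewrite /th; lra.
have mpos : (0 : R) < m%:R by rewrite ltr0n.
have Fgt : 0 < th -> m%:R * th < 2 / pi * m%:R * tan (pi / 2 * th).
  by move=> t0; apply: fin_F.
split; [|split].
- move=> H.
  have mth : 1 <= m%:R * th.
    rewrite leNgt; apply/negP => hlt.
    have [n hn] := @lattice R c gamma m fl h0 h1 he ho hx m0 th0 hlt.
    by move: (H n); rewrite hn eqxx.
  have t0 : 0 < th.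
    have : 0 < m%:R * th by apply: lt_le_trans mth.
    by rewrite pmulr_rgt0.
  exact: le_lt_trans mth (Fgt t0).
- case=> n [hfl hm hc].
  change (fl = cf_p c (2 * n)%N) in hfl.
  change (m%:Z = cf_q c (2 * n)%N) in hm.
  change (c (2 * n)%N.+1 = 1%N) in hc.
  have [ep eq] := @cf_pq c (2 * n)%N cpos.
  rewrite ep in hfl; rewrite eq in hm.
  set Q := cfq c (2 * n)%N.+1 in hm; set P := cfp c (2 * n)%N.+1 in hfl.
  set Q' := cfq c (2 * n)%N; set P' := cfp c (2 * n)%N.
  have thE : th = Q%:~R * gamma - P%:~R.
    by rewrite /th hfl; change (m%:R : R) with ((m%:Z)%:~R : R); rewrite hm.
  have hc2 : c (2 * n)%N.+2 = 1%N.
    by rewrite -[RHS](he n.+1 isT); congr c; lia.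
  have hc4 : c (2 * n)%N.+4 = 1%N.
    by rewrite -[RHS](he n.+2 isT); congr c; lia.
  have ht : c (2 * n)%N.+3 = 1%N \/ c (2 * n)%N.+3 = 2%N.
    have := @codd c n.+1 h1 ho.
    by have -> : (2 * n.+1)%N.+1 = (2 * n)%N.+3 by lia.
  have EP := @exp_gen (cfp c) c (2 * n)%N (cfpSS c) hc hc2 hc4.
  have EQ := @exp_gen (cfq c) c (2 * n)%N (cfqSS c) hc hc2 hc4.
  have det := cf_det c (2 * n)%N.
  rewrite exprS exprM sqrrN !expr1n mulr1 -/P -/Q -/P' -/Q' in det.
  have qr := @q_ratio c n cpos h1 he ho; rewrite -/Q -/Q' in qr.
  have [Q'0 Q1 _] := @cfq_pos c cpos (2 * n)%N; rewrite -/Q -/Q' in Q'0 Q1.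
  set t := (c (2 * n)%N.+3)%:Z in EP EQ.
  set p5 := cfp c (2 * n)%N.+4.+1 in EP; set q5 := cfq c (2 * n)%N.+4.+1 in EQ.
  have D5 : Q * p5 - P * q5 = t + 2.
    rewrite EP EQ.
    transitivity ((t + 2) * (- (P * Q' - P' * Q))); first by ring.
    by rewrite det opprK mulr1.
  have q50 : 0 < q5 by have [_ h _] := @cfq_pos c cpos (2 * n)%N.+4; exact: h.
  have key : 2 * q5 <= Q * (Q * p5 - P * q5) * 5.
    rewrite D5 EQ /t; case: ht => ->; lia.
  have l5 := @gam_lo R c gamma n.+2 cpos hx.
  have e5 : (2 * n.+2)%N.+1 = (2 * n)%N.+4.+1 by lia.
  rewrite e5 /U -/p5 -/q5 ltr_pdivrMr ?ltr0z // in l5.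
  have l1 := @gam_lo R c gamma n cpos hx.
  rewrite /U -/P -/Q ltr_pdivrMr ?ltr0z // in l1; 
  have t0 : 0 < th by rewrite thE subr_gt0 mulrC.
  have := @fin_ii' R Q P q5 p5 gamma (ltac:(lia)) q50 l5 key.
  rewrite -thE; change (Q%:~R : R) with ((Q : int)%:~R : R); rewrite -hm => h.
  exact: lt_trans h (Fgt t0).
- case=> n [hfl hm hc].
  change (fl = cf_p c (2 * n)%N) in hfl.
  change (m%:Z = cf_q c (2 * n)%N) in hm.
  change (c (2 * n)%N.+1 = 2%N) in hc.
  have n0 : (0 < n)%N by case: n hc {hfl hm} => [|n]; [rewrite h1 | ].
  have [ep eq] := @cf_pq c (2 * n)%N cpos.
  rewrite ep in hfl; rewrite eq in hm.
  set Q := cfq c (2 * n)%N.+1 in hm; set P := cfp c (2 * n)%N.+1 in hfl.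
  set Q' := cfq c (2 * n)%N; set P' := cfp c (2 * n)%N.
  have thE : th = Q%:~R * gamma - P%:~R.
    by rewrite /th hfl; change (m%:R : R) with ((m%:Z)%:~R : R); rewrite hm.
  have hc2 : c (2 * n)%N.+2 = 1%N.
    by rewrite -[RHS](he n.+1 isT); congr c; lia.
  have ht : c (2 * n)%N.+3 = 1%N \/ c (2 * n)%N.+3 = 2%N.
    have := @codd c n.+1 h1 ho.
    by have -> : (2 * n.+1)%N.+1 = (2 * n)%N.+3 by lia.
  have EP := @exp_gen3 (cfp c) c (2 * n)%N (cfpSS c) hc hc2.
  have EQ := @exp_gen3 (cfq c) c (2 * n)%N (cfqSS c) hc hc2.
  have det := cf_det c (2 * n)%N.
  rewrite exprS exprM sqrrN !expr1n mulr1 -/P -/Q -/P' -/Q' in det.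
  have qr := @q_ratio2 c n cpos he n0; rewrite -/Q -/Q' in qr.
  have [Q'0 Q1 _] := @cfq_pos c cpos (2 * n)%N; rewrite -/Q -/Q' in Q'0 Q1.
  set t := (c (2 * n)%N.+3)%:Z in EP EQ.
  set p4 := cfp c (2 * n)%N.+4 in EP; set q4 := cfq c (2 * n)%N.+4 in EQ.
  have D4 : Q * p4 - P * q4 = t + 1.
    rewrite EP EQ.
    transitivity ((t + 1) * (- (P * Q' - P' * Q))); first by ring.
    by rewrite det opprK mulr1.
  have q40 : 0 < q4 by have [_ h _] := @cfq_pos c cpos (2 * n)%N.+3; exact: h.
  have key : 3 * (Q * (Q * p4 - P * q4)) <= q4.
    rewrite D4 EQ /t; case: ht => ->; lia.
  have l4 := @gam_hi R c gamma n.+1 cpos hx.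
  have e4 : (2 * n.+1)%N.+2 = (2 * n)%N.+4 by lia.
  rewrite e4 /U -/p4 -/q4 ltr_pdivlMr ?ltr0z // in l4.
  have l1 := @gam_lo R c gamma n cpos hx.
  rewrite /U -/P -/Q ltr_pdivrMr ?ltr0z // in l1.
  have t0 : 0 < th by rewrite thE subr_gt0 mulrC.
  have := @fin_iii' R Q P q4 p4 gamma (ltac:(lia)) q40 l4 key.
  rewrite -thE; change (Q%:~R : R) with ((Q : int)%:~R : R); rewrite -hm => h.
  have Q2 : 2 <= Q.
    have := q_ge c (2 * n)%N cpos; rewrite -/Q; lia.
  have m2 : (2 : R) <= m%:R by rewrite (ler_nat R 2 m); lia.
  exact: fin_tan m2 t0 h.
Qed.
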